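(* Fix a sequence $(d_n)_{n\ge 0}$ of non-zero complex numbers (the ''denominators''). Let $M=(M(n,k))_{n,k\ge 0}$ be an infinite lower triangular complex matrix with all diagonal entries equal to $1$ (a unipotent matrix), and suppose $M$ is the matrix of a substitution with prefunction, i.e. there exist formal power series $g(x),\phi(x)\in\mathbf{C}[[x]]$ with $\phi(0)=0$ such that for every $k\ge 0$ $$\sum_{n\ge 0} M(n,k)\frac{x^n}{d_n}=g(x)\frac{\phi(x)^k}{d_k}.$$ Write $M=I+N$ and, for $t\in\mathbf{C}$, define $M^t=\sum_{j\ge 0}\binom{t}{j}N^j$, where $\binom{t}{j}=\frac{t(t-1)\cdots(t-j+1)}{j!}$. Then for every $t\in\mathbf{C}$, $M^t$ is again the matrix of a substitution with prefunction, i.e. there exist formal power series $g_t,\phi_t\in\mathbf{C}[[x]]$ with $\phi_t(0)=0$ such that $\sum_{n\ge0}M^t(n,k)\frac{x^n}{d_n}=g_t(x)\frac{\phi_t(x)^k}{d_k}$ for all $k\ge 0$.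
   Context: Since $N=M-I$ is strictly lower triangular, each entry of $N^j$ in row $n$ vanishes for $j>n$, so each entry $M^t(n,k)$ is a finite sum (a polynomial in $t$); $M^t$ is lower triangular with ones on the diagonal and satisfies $M^{t_1+t_2}=M^{t_1}M^{t_2}$. The matrix $M$ acts on sequences $(a_k)$ by $b_n=\sum_k M(n,k)a_k$; through the denominators $(d_n)$ a sequence $(a_n)$ is identified with the series $\sum_n a_n x^n/d_n$, and a matrix of the stated form corresponds to the transformation $f(x)\mapsto g(x)f(\phi(x))$. *)

(* Defs.v *)
From mathcomp Require Import all_boot all_order all_algebra.
From mathcomp Require Import complex.
From mathcomp Require Import reals.
Set Implicit Arguments. Unset Strict Implicit. Unset Printing Implicit Defensive.
Import Order.TTheory GRing.Theory Num.Theory.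
Local Open Scope ring_scope.

Definition fps (K : Type) := nat -> K.

Definition fps_one (K : nzRingType) : fps K := fun n => if n == 0%N then 1 else 0.

Definition fps_mul (K : nzRingType) (f g : fps K) : fps K :=
  fun n => \sum_(i < n.+1) f i * g (n - i)%N.

Definition fps_pow (K : nzRingType) (f : fps K) (k : nat) : fps K :=
  iter k (fps_mul f) (fps_one K).

Definition imat (K : Type) := nat -> nat -> K.

Definition lower_unipotent (K : nzRingType) (M : imat K) : Prop :=
  (forall n k, (n < k)%N -> M n k = 0) /\ (forall n, M n n = 1).

Definition imat_id (K : nzRingType) : imat K := fun n k => if n == k then 1 else 0.

(* Product of infinite matrices, for a lower triangular left factor:
   (A B)(n,k) = sum_{i} A(n,i) B(i,k), where only i <= n contribute. *)
Definition imat_mul (K : nzRingType) (A B : imat K) : imat K :=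
  fun n k => \sum_(i < n.+1) A n i * B i k.

Definition imat_pow (K : nzRingType) (A : imat K) (j : nat) : imat K :=
  iter j (imat_mul A) (imat_id K).

Definition gbinom (K : fieldType) (t : K) (j : nat) : K :=
  (\prod_(i < j) (t - i%:R)) / (j`!)%:R.

(* M^t = sum_{j>=0} binom(t,j) N^j with N = M - I; in row n only j <= n
   can contribute since N is strictly lower triangular. *)
Definition imat_tpow (K : fieldType) (M : imat K) (t : K) : imat K :=
  fun n k => \sum_(j < n.+1) gbinom t j * imat_pow (fun a b => M a b - imat_id K a b) j n k.

Definition subst_prefun (K : fieldType) (d : nat -> K) (M : imat K)
  (g phi : fps K) : Prop :=
  phi 0%N = 0 /\
  forall k n, M n k / d n = fps_mul g (fps_pow phi k) n / d k.

(* Main.v *)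
Require Import Defs.
From mathcomp Require Import all_boot all_order all_algebra.
From mathcomp Require Import complex reals ring zify.
Set Implicit Arguments. Unset Strict Implicit. Unset Printing Implicit Defensive.
Import Order.TTheory GRing.Theory Num.Theory.
Local Open Scope ring_scope.

Section Fps.
Variable K : numFieldType.

Lemma fps_mul_poly (f g : fps K) n N : (n < N)%N ->
  fps_mul f g n = (\poly_(i < N) f i * \poly_(i < N) g i)`_n.
Proof.
move=> hn; rewrite coefM /fps_mul; apply: eq_bigr => i _.
have hi : (i < N)%N by apply: leq_ltn_trans hn; rewrite -ltnS.
have hni : (n - i < N)%N by apply: leq_ltn_trans hn; apply: leq_subr.
by rewrite !coef_poly hi hni.
Qed.

Lemma fps_mulCA (f g h : fps K) n :
  fps_mul f (fps_mul g h) n = fps_mul g (fps_mul f h) n.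
Proof.
set T := fun u : fps K => \poly_(i < n.+1) u i.
have E : forall (u v w : fps K), fps_mul u (fps_mul v w) n = (T u * (T v * T w))`_n.
  move=> u v w; rewrite coefM {1}/fps_mul; apply: eq_bigr => i _.
  rewrite (@fps_mul_poly v w (n - i) n.+1); last by rewrite ltnS leq_subr.
  by rewrite /T coef_poly ltn_ord.
by rewrite !E mulrCA.
Qed.

Lemma fps_mul_rev (f h : fps K) n :
  \sum_(l < n.+1) f (n - l)%N * h l = fps_mul f h n.
Proof.
rewrite /fps_mul (reindex_inj rev_ord_inj) /=; apply: eq_bigr => i _.
by rewrite subSS subKn // -ltnS.
Qed.

Lemma fps_mul_one (g : fps K) n : fps_mul g (fps_one K) n = g n.
Proof.
rewrite /fps_mul big_ord_recr /= subnn /fps_one eqxx mulr1 big1 ?add0r //.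
by move=> i _; rewrite subn_eq0 leqNgt ltn_ord /= mulr0.
Qed.

End Fps.

Definition Nm (K : nzRingType) (M : imat K) : imat K := fun a b => M a b - imat_id K a b.

Section Sc.
Variable K : numFieldType.
Variable d : nat -> K.
Hypothesis hd : forall n, d n != 0.
Definition sc (A : imat K) : imat K := fun n k => A n k * d k / d n.

Lemma sc_pow (A : imat K) j n k : imat_pow (sc A) j n k = sc (imat_pow A j) n k.
Proof.
elim: j n k => [|j IH] n k /=.
  rewrite /sc /imat_id; case: eqP => [->|_]; last by rewrite !mul0r.
  by rewrite mul1r divff.
rewrite /imat_mul /sc mulr_suml; rewrite mulr_suml; apply: eq_bigr => i _.
rewrite IH /sc; field; by rewrite !hd.
Qed.

Lemma sc_Nm (M : imat K) n k : Nm (sc M) n k = sc (Nm M) n k.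
Proof.
rewrite /Nm /sc /imat_id; case: eqP => [->|_]; last by rewrite !subr0.
field; by rewrite hd.
Qed.

Lemma sc_tpow (M : imat K) t n k : imat_tpow (sc M) t n k = sc (imat_tpow M t) n k.
Proof.
have E : forall j n k, imat_pow (fun a b => sc M a b - imat_id K a b) j n k = imat_pow (sc (Nm M)) j n k.
  elim=> [|j IH] n' k' //=.
  by rewrite /imat_mul; apply: eq_bigr => i _; rewrite IH -sc_Nm.
rewrite /imat_tpow /sc mulr_suml mulr_suml; apply: eq_bigr => j _.
by rewrite E sc_pow /sc !mulrA.
Qed.
End Sc.

Section Gb.
Variable K : numFieldType.
Lemma gbinom0 (t : K) : gbinom t 0 = 1.
Proof. by rewrite /gbinom big_ord0 fact0 divr1. Qed.
Lemma gbinomS (t : K) j : gbinom (t + 1) j.+1 = gbinom t j.+1 + gbinom t j.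
Proof.
rewrite /gbinom big_ord_recl big_ord_recr /=.
have -> : \prod_(i < j) (t + 1 - (bump 0 i)%:R) = \prod_(i < j) (t - i%:R).
  by apply: eq_bigr => i _; rewrite /bump /= mulrSr; ring.
rewrite factS natrM; field.
by rewrite pnatr_eq0 -lt0n fact_gt0 -mulrS pnatr_eq0.
Qed.

Lemma gbinom_nat m j : gbinom (m%:R : K) j = 'C(m, j)%:R.
Proof.
elim: m j => [|m IH] [|j]; rewrite ?gbinom0 ?bin0 //.
  by rewrite /gbinom big_ord_recl subrr mul0r mul0r bin0n.
by rewrite mulrSr gbinomS !IH binS natrD.
Qed.
End Gb.


Section Inf.
Variable K : numFieldType.


Lemma pow_strict (B : imat K) : (forall i k, (i <= k)%N -> B i k = 0) ->
  forall j i k, (i < k + j)%N -> imat_pow B j i k = 0.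
Proof.
move=> hB; elim=> [|j IH] i k hi.
  by rewrite /= /imat_id; case: eqP => // e; move: hi; rewrite e addn0 ltnn.
rewrite /= /imat_mul big1 // => l _.
case: (leqP i l) => hl; first by rewrite hB // mul0r.
by rewrite IH ?mulr0 //; apply: leq_trans hl _; rewrite -ltnS -addnS.
Qed.

Lemma Nm_strict (M : imat K) : lower_unipotent M ->
  forall i k, (i <= k)%N -> Nm M i k = 0.
Proof.
move=> [hl hd] i k; rewrite leq_eqVlt => /orP[/eqP->|h].
  by rewrite /Nm hd /imat_id eqxx subrr.
by rewrite /Nm hl // /imat_id (ltn_eqF h) subrr.
Qed.


Lemma tpow_lu (M : imat K) t : lower_unipotent M -> lower_unipotent (imat_tpow M t).
Proof.
move=> hM.
have key : forall n k, (n <= k)%N -> imat_tpow M t n k = imat_id K n k.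
  move=> n k hnk; rewrite /imat_tpow big_ord_recl big1 ?addr0.
    by rewrite gbinom0 mul1r.
  move=> j _; rewrite pow_strict ?mulr0 //; first exact: Nm_strict.
  by rewrite addnS ltnS (leq_trans hnk) ?leq_addr.
split=> [n k h|n]; rewrite key ?leqnn ?(ltnW h) // /imat_id.
  by rewrite (ltn_eqF h).
by rewrite eqxx.
Qed.
End Inf.


Section Mx.
Variable K : numFieldType.
Variable N' : nat.
Local Notation N := N'.+1.

Definition tr (A : imat K) : 'M[K]_N := \matrix_(i, j) A i j.
Definition Xm : 'M[K]_N := \matrix_(i, j) ((i : nat) == j.+1)%:R.

Lemma tr_id : tr (imat_id K) = 1%:M.
Proof. by apply/matrixP => i j; rewrite !mxE /imat_id -val_eqE /=; case: (_ == _). Qed.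

Lemma tr_mul (A B : imat K) : (forall i l, (i < l)%N -> A i l = 0) ->
  tr (imat_mul A B) = tr A *m tr B.
Proof.
move=> hA; apply/matrixP => i k; rewrite !mxE /imat_mul.
rewrite (big_ord_widen N (fun l => A i l * B l k) (ltn_ord i)) big_mkcond /=.
apply: eq_bigr => l _; rewrite !mxE; case: ifP => // /negbT.
by rewrite -leqNgt => h; rewrite hA ?mul0r.
Qed.

Lemma tr_pow (A : imat K) j : (forall i l, (i < l)%N -> A i l = 0) ->
  tr (imat_pow A j) = tr A ^+ j.
Proof.
move=> hA; elim: j => [|j IH]; first by rewrite expr0 /= tr_id.
by rewrite exprS /= tr_mul // IH mulmxE.
Qed.

Lemma mulX (F : nat -> nat -> K) :
  (\matrix_(i, j) F i j : 'M_N) *m Xm = \matrix_(i, j) (if (j.+1 < N)%N then F i j.+1 else 0).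
Proof.
apply/matrixP => i j; rewrite !mxE.
case: ifP => h.
  rewrite (bigD1 (Ordinal h)) //= big1 ?addr0; first by rewrite !mxE eqxx mulr1.
  move=> a ha; rewrite !mxE; case: eqP => e; last by rewrite mulr0.
  by move: ha; rewrite -val_eqE /= e eqxx.
rewrite big1 // => a _; rewrite !mxE; case: eqP => e; last by rewrite mulr0.
by move: (ltn_ord a); rewrite e h.
Qed.

Lemma Xmul (F : nat -> nat -> K) :
  Xm *m (\matrix_(i, j) F i j : 'M_N) = \matrix_(i, j) (if (i : nat) is i'.+1 then F i' j else 0).
Proof.
apply/matrixP => i j; rewrite !mxE.
case: i => [[|i] hi] /=.
  rewrite big1 // => a _; rewrite !mxE; by rewrite mul0r.
have h : (i < N)%N by apply: ltnW.
rewrite (bigD1 (Ordinal h)) //= big1 ?addr0; first by rewrite !mxE eqxx mul1r.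
move=> a ha; rewrite !mxE; case: eqP => e; last by rewrite mul0r.
by move: ha; rewrite -val_eqE /=; case: e => ->; rewrite eqxx.
Qed.

Lemma Xpow l : Xm ^+ l = \matrix_(i, j) ((i : nat) == (j + l)%N)%:R.
Proof.
elim: l => [|l IH].
  by apply/matrixP => i j; rewrite expr0 !mxE addn0 -val_eqE.
rewrite exprSr IH -mulmxE (mulX (fun i j => ((i == (j + l)%N)%:R))); apply/matrixP => i j; rewrite !mxE addSnnS.
case: ifP => // /negbT; rewrite -leqNgt => h.
case: eqP => // e; move: (ltn_ord i); rewrite e ltnNge.
by rewrite addnS ltnS (leq_trans _ (leq_addr _ _)) // -ltnS.
Qed.


Definition nf (T : 'M[K]_N) (i j : nat) : K := T (inord i) (inord j).

Lemma nfE (T : 'M[K]_N) : T = \matrix_(i, j) nf T i j.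
Proof. by apply/matrixP => i j; rewrite mxE /nf !inord_val. Qed.

Lemma toep (T : 'M[K]_N) : T *m Xm = Xm *m T ->
  forall j i, (i < N)%N -> (j < N)%N -> nf T i j = if (j <= i)%N then nf T (i - j) 0 else 0.
Proof.
move=> E0.
have E : (\matrix_(i, j) nf T i j : 'M_N) *m Xm = Xm *m \matrix_(i, j) nf T i j by rewrite -nfE.
rewrite (mulX (nf T)) (Xmul (nf T)) in E.
elim=> [|j IH] i hi hj; first by rewrite subn0.
have hj' : (j < N)%N by apply: ltnW.
have := congr1 (fun A : 'M[K]_N => A (Ordinal hi) (Ordinal hj')) E; rewrite !mxE /= hj.
case: i hi {E} => [|i] hi -> //.
by rewrite IH ?ltnS ?subSS // ltnW.
Qed.

Definition Phi (phi : nat -> K) : 'M[K]_N := \sum_(l < N) phi l *: Xm ^+ l.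

Lemma PhiE (phi : nat -> K) : Phi phi = \matrix_(i, j) (if (j <= i)%N then phi (i - j)%N else 0).
Proof.
apply/matrixP => i j; rewrite /Phi summxE !mxE.
under eq_bigr => l _ do rewrite Xpow !mxE.
case: ifP => h.
  have hl : (i - j < N)%N by apply: leq_ltn_trans (ltn_ord i); apply: leq_subr.
  rewrite (bigD1 (Ordinal hl)) //= big1 ?addr0; first by rewrite subnKC // eqxx mulr1.
  move=> l hl'; case: eqP => e; last by rewrite mulr0.
  by move: hl'; rewrite -val_eqE /= e addKn eqxx.
rewrite big1 // => l _; case: eqP => e; last by rewrite mulr0.
by move: h; rewrite e leq_addr.
Qed.

End Mx.

Lemma sum_ext0 (V : nmodType) (F : nat -> V) a b :
  (forall j, (a <= j)%N -> F j = 0) -> (a <= b)%N ->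
  \sum_(j < a) F j = \sum_(j < b) F j.
Proof.
move=> hF hab; rewrite (big_ord_widen b F hab) big_mkcond /=.
apply: eq_bigr => j _; case: ifP => // /negbT; rewrite -leqNgt => h.
by rewrite hF.
Qed.

Lemma poly_nat0 (K : numFieldType) (p : {poly K}) : (forall m : nat, p.[m%:R] = 0) -> p = 0.
Proof.
move=> hp; apply/eqP; apply: contraT => hp0.
have := @max_poly_roots _ p [seq (m%:R : K) | m <- iota 0 (size p)] hp0.
rewrite size_map size_iota ltnn; apply.
  by apply/allP => x /mapP [m _ ->]; apply/rootP.
rewrite map_inj_uniq ?iota_uniq // => a b /eqP; by rewrite eqr_nat => /eqP.
Qed.

Section Main.
Variable K : numFieldType.
Variable M : imat K.
Hypothesis hM : lower_unipotent M.
Variable phi : nat -> K.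
Hypothesis hcol : forall i j, M i j.+1 = \sum_(l < i.+1) phi (i - l)%N * M l j.
Variable N' : nat.
Local Notation N := N'.+1.
Local Notation tr := (@tr K N').
Local Notation Xm := (@Xm K N').

Lemma Nm_lower i l : (i < l)%N -> Nm M i l = 0.
Proof. by move=> h; apply: Nm_strict => //; apply: ltnW. Qed.

Lemma tpow_sum t : tr (imat_tpow M t) = \sum_(j < N) gbinom t j *: (tr (Nm M)) ^+ j.
Proof.
apply/matrixP => i k; rewrite summxE !mxE /imat_tpow.
rewrite (@sum_ext0 _ (fun j => gbinom t j * imat_pow (Nm M) j i k) i.+1 N).
- apply: eq_bigr => j _; rewrite -tr_pow; last exact: Nm_lower.
  by rewrite !mxE.
- move=> j hj; rewrite pow_strict ?mulr0 //; first exact: Nm_strict.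
  exact: (leq_trans hj (leq_addl _ _)).
- exact: (ltn_ord i).
Qed.

Lemma Nmat_nil j : (N <= j)%N -> (tr (Nm M)) ^+ j = 0.
Proof.
move=> hj; rewrite -tr_pow; last exact: Nm_lower.
apply/matrixP => i k; rewrite !mxE pow_strict //; first exact: Nm_strict.
by apply: leq_trans (ltn_ord i) _; apply: leq_trans hj _; apply: leq_addl.
Qed.

Lemma trM_split : tr M = tr (Nm M) + 1.
Proof.
apply/matrixP => i k; rewrite !mxE /Nm /imat_id -val_eqE /=; case: (_ == _); by rewrite subrK.
Qed.

Lemma tpow_nat m : tr (imat_tpow M m%:R) = (tr M) ^+ m.
Proof.
rewrite tpow_sum trM_split exprD1n.
under eq_bigr => j _ do rewrite gbinom_nat scaler_nat.
rewrite (@sum_ext0 _ (fun j => tr (Nm M) ^+ j *+ 'C(m, j)) N (N + m.+1)%N); last first.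
- exact: leq_addr.
- by move=> j hj; rewrite Nmat_nil // mul0rn.
rewrite [RHS](@sum_ext0 _ (fun j => tr (Nm M) ^+ j *+ 'C(m, j)) m.+1 (N + m.+1)%N) //.
- by move=> j hj; rewrite bin_small.
- exact: leq_addl.
Qed.


Lemma trM_X : tr M *m Xm = Phi N' phi *m tr M.
Proof.
apply/matrixP => i j; rewrite /tr (@mulX K N' (fun i j => M i j)) PhiE !mxE.
under eq_bigr => a _ do rewrite !mxE.
rewrite -(@sum_ext0 _ (fun a => (if (a <= i)%N then phi (i - a)%N else 0) * M a j) i.+1 N); last first.
- exact: (ltn_ord i).
- by move=> a ha; rewrite leqNgt ha mul0r.
have -> : \sum_(a < i.+1) (if (a <= i)%N then phi (i - a)%N else 0) * M a j = M i j.+1.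
  by rewrite hcol; apply: eq_bigr => a _; rewrite -ltnS ltn_ord.
case: ifP => // /negbT; rewrite -leqNgt => h.
by rewrite hM.1 //; apply: leq_trans h.
Qed.

Lemma psi_ex m : exists Psi : 'M[K]_N, Psi *m Xm = Xm *m Psi /\ (tr M) ^+ m *m Xm = Psi *m (tr M) ^+ m.
Proof.
elim: m => [|m [Psi [hc hm]]]; first by exists Xm; rewrite expr0 mul1mx mulmx1.
set B := tr M ^+ m.
have hl : forall l, B *m Xm ^+ l = Psi ^+ l *m B.
  elim=> [|l IH]; first by rewrite !expr0 mul1mx mulmx1.
  by rewrite !exprSr -!mulmxE mulmxA IH -mulmxA hm mulmxA.
have hcl : forall l, Psi ^+ l *m Xm = Xm *m Psi ^+ l.
  elim=> [|l IH]; first by rewrite !expr0 mul1mx mulmx1.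
  by rewrite exprSr -!mulmxE -mulmxA hc !mulmxA IH.
exists (\sum_(l < N) phi l *: Psi ^+ l); split.
  rewrite mulmx_suml mulmx_sumr; apply: eq_bigr => l _.
  by rewrite -scalemxAl -scalemxAr hcl.
rewrite exprSr -mulmxE -mulmxA trM_X mulmxA [RHS]mulmxA; congr (_ *m _).
rewrite /Phi mulmx_sumr mulmx_suml; apply: eq_bigr => l _.
by rewrite -scalemxAr -scalemxAl hl.
Qed.

Lemma det1 t : \det (tr (imat_tpow M t)) = 1.
Proof.
have [hl hd] := tpow_lu t hM.
rewrite det_trig; last by apply/is_trig_mxP => i j h; rewrite mxE hl.
by rewrite big1 // => i _; rewrite mxE hd.
Qed.


Definition gbP (j : nat) : {poly K} := (\prod_(i < j) ('X - (i%:R)%:P)) * ((j`!)%:R^-1)%:P.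
Definition PM : 'M[{poly K}]_N := \sum_(j < N) gbP j *: map_mx polyC (tr (Nm M) ^+ j).
Definition XP : 'M[{poly K}]_N := map_mx polyC Xm.

Lemma evPM t : map_mx (horner_eval t) PM = tr (imat_tpow M t).
Proof.
rewrite tpow_sum; apply/matrixP => i k; rewrite !mxE summxE horner_evalE horner_sum summxE.
apply: eq_bigr => j _; rewrite !mxE hornerM hornerC /gbP hornerM hornerC horner_prod.
by congr (_ * _); rewrite /gbinom; congr (_ / _); apply: eq_bigr => l _; rewrite hornerXsubC.
Qed.

Lemma evXP t : map_mx (horner_eval t) XP = Xm.
Proof. by apply/matrixP => i k; rewrite !mxE horner_evalE hornerC. Qed.

Definition EP : 'M[{poly K}]_N :=
  (PM *m XP *m \adj PM) *m XP - XP *m (PM *m XP *m \adj PM).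

Lemma evEP t : map_mx (horner_eval t) EP =
  let A := tr (imat_tpow M t) in (A *m Xm *m \adj A) *m Xm - Xm *m (A *m Xm *m \adj A).
Proof. by rewrite /EP map_mxB !map_mxM map_mx_adj evPM evXP. Qed.

Lemma comm_all t : let A := tr (imat_tpow M t) in
  (A *m Xm *m \adj A) *m Xm = Xm *m (A *m Xm *m \adj A).
Proof.
have E0 : EP = 0.
  apply/matrixP => i k; rewrite [RHS]mxE; apply: poly_nat0 => m.
  have := congr1 (fun B : 'M[K]_N => B i k) (evEP m%:R).
  rewrite mxE horner_evalE => ->.
  rewrite /= tpow_nat; have [Psi [hc hm]] := psi_ex m.
  have hdet : \det (tr M ^+ m) = 1 by rewrite -tpow_nat det1.
  rewrite hm -(mulmxA Psi) mul_mx_adj hdet mulmx1 hc.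
  by rewrite subrr mxE.
move=> A; apply/eqP; rewrite -subr_eq0; apply/eqP.
by have := evEP t; rewrite E0 map_mx0 /= => <-.
Qed.


Definition Tm t : 'M[K]_N := let A := tr (imat_tpow M t) in A *m Xm *m \adj A.

Lemma colrecN t i j : (i < N)%N -> (j.+1 < N)%N ->
  imat_tpow M t i j.+1 = \sum_(l < i.+1) nf (Tm t) (i - l)%N 0 * imat_tpow M t l j.
Proof.
move=> hi hj.
have hj' : (j < N)%N by apply: ltnW.
set G := imat_tpow M t.
have hAT : tr G *m Xm = Tm t *m tr G.
  by rewrite /Tm -mulmxA mul_adj_mx det1 mulmx1.
have hc := comm_all t.
have := congr1 (fun B : 'M[K]_N => B (Ordinal hi) (Ordinal hj')) hAT.
rewrite /tr (@mulX K N' (fun i j => G i j)) {1}(nfE (Tm t)) !mxE /= hj => ->.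
under eq_bigr => l _ do rewrite !mxE (toep hc) //.
rewrite -(@sum_ext0 _ (fun l => (if (l <= i)%N then nf (Tm t) (i - l) 0 else 0) * G l j) i.+1 N) //.
- by apply: eq_bigr => l _; rewrite -ltnS ltn_ord.
- by move=> l hl; rewrite leqNgt hl mul0r.
Qed.

End Main.

Lemma uniq_div (K : numFieldType) (c0 tau tau' : nat -> K) m : c0 0%N = 1 ->
  (forall i, (i <= m)%N -> \sum_(l < i.+1) tau (i - l)%N * c0 l = \sum_(l < i.+1) tau' (i - l)%N * c0 l) ->
  tau m = tau' m.
Proof.
move=> h0 hs.
suff : forall i, (i <= m)%N -> tau i = tau' i by apply.
elim/ltn_ind => i IH him.
have := hs i him; rewrite !big_ord_recl /= !subn0 h0 !mulr1.
have -> : \sum_(l < i) tau (i - bump 0 l)%N * c0 (bump 0 l) = \sum_(l < i) tau' (i - bump 0 l)%N * c0 (bump 0 l).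
  apply: eq_bigr => l _; rewrite IH //.
  - have := ltn_ord l; rewrite /bump /=; lia.
  - rewrite /bump /=; lia.
by move/addIr.
Qed.

Section Final.
Variable K : numFieldType.
Variable M : imat K.
Hypothesis hM : lower_unipotent M.
Variables g phi : fps K.
Hypothesis hs : subst_prefun (fun _ => 1) M g phi.

Lemma hcol : forall i j, M i j.+1 = \sum_(l < i.+1) phi (i - l)%N * M l j.
Proof.
have E : forall k n, M n k = fps_mul g (fps_pow phi k) n.
  by move=> k n; have := hs.2 k n; rewrite !divr1.
move=> i j; rewrite E /= fps_mulCA -fps_mul_rev.
by apply: eq_bigr => l _; rewrite E.
Qed.

Variable t : K.
Definition G := imat_tpow M t.
Definition phit (m : nat) : K := nf (Tm M m.+1 t) m 0.

Lemma consist N' m : (m < N')%N -> nf (Tm M N' t) m 0 = phit m.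
Proof.
move=> hm; rewrite /phit.
apply: (@uniq_div K (fun l => G l 0) (fun x => nf (Tm M N' t) x 0) (fun x => nf (Tm M m.+1 t) x 0)) => [|i hi].
  by rewrite /G (tpow_lu t hM).2.
rewrite /G -!(colrecN hM hcol) //; lia.
Qed.

Lemma colrec_all i j : G i j.+1 = \sum_(l < i.+1) phit (i - l)%N * G l j.
Proof.
rewrite /G (@colrecN K M hM phi hcol (i + j).+1 t i j) //; last first.
- by rewrite !ltnS leq_addl.
- by rewrite ltnS; apply: leq_trans (leq_addr _ _) _.
apply: eq_bigr => l _; rewrite consist //.
by rewrite ltnS; apply: leq_trans (leq_subr _ _) (leq_addr _ _).
Qed.

Lemma final : subst_prefun (fun _ => 1) G (fun n => G n 0) phit.
Proof.
have [hl hd] := tpow_lu t hM.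
split.
  have := colrec_all 0 0; rewrite big_ord1 subn0 /G hd mulr1 => <-.
  by rewrite hl.
move=> k n; rewrite !divr1; elim: k n => [|k IH] n.
  by rewrite /= fps_mul_one.
rewrite colrec_all /= fps_mulCA -fps_mul_rev.
by apply: eq_bigr => l _; rewrite IH.
Qed.
End Final.

Unset Implicit Arguments.

Theorem mainTheorem1 (R : realType) (d : nat -> R[i]) (M : imat R[i]) :
  (forall n, d n != 0) ->
  lower_unipotent M ->
  (exists g phi : fps R[i], subst_prefun d M g phi) ->
  forall t : R[i], exists gt phit : fps R[i], subst_prefun d (imat_tpow M t) gt phit.
Proof.
move=> hd [hl hdg] [g [phi [h0 hs]]] t.
set Ms := sc d M.
have hMs : lower_unipotent Ms.
  split=> [n k h|n]; rewrite /Ms /sc; first by rewrite hl // !mul0r.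
  by rewrite hdg mul1r divff.
have hss : subst_prefun (fun _ => 1) Ms g phi.
  split=> // k n; rewrite !divr1 /Ms /sc.
  have := hs k n => E; rewrite mulrAC E; field; exact: hd.
have [h0' hf] := final hMs hss t.
exists (fun n => G Ms t n 0), (phit Ms t); split=> // k n.
have := hf k n; rewrite /G sc_tpow // /sc !divr1 => <-.
field; by rewrite !hd.
Qed.
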